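(* Let $(W,\omega^W)$ be a vertex operator algebra. The map $\pi:\operatorname{ScAlg}(W,\omega^W)\to\operatorname{Sc}(W,\omega^W)$, $(V,\omega^V)\mapsto\omega^V$, restricts to a bijection from $\overline{\operatorname{S}(W,\omega^W)}$ onto $\operatorname{Sc}(W,\omega^W)$, whose inverse is $\omega'\mapsto (C_W(C_W(\langle\omega'\rangle)),\omega')$.
   Context: For a vertex operator algebra $(W,\omega^W)$ with $Y(v,z)=\sum_n v_nz^{-n-1}$ and $Y(\omega^W,z)=\sum_n L^W(n)z^{-n-2}$: a vertex operator subalgebra $(V,\omega^V)$ (a vertex subalgebra $V\ni\mathbf 1$ with a vector $\omega^V\in V$ making it a vertex operator algebra, possibly with a different conformal vector) is semi-conformal if $L^W(n)|_V=L^V(n)|_V$ for all $n\ge0$; $\omega^V$ is then called a semi-conformal vector. $\operatorname{ScAlg}(W,\omega^W)$ is the set of semi-conformal subalgebras, $\operatorname{Sc}(W,\omega^W)$ the set of semi-conformal vectors. For a vertex subalgebra $U$, the commutant is $C_W(U)=\{v\in W: u_nv=0\ \forall u\in U,\ n\ge 0\}$. $\langle\omega'\rangle$ denotes the vertex subalgebra generated by $\omega'$ and $\mathbf 1$. $\overline{\operatorname{S}(W,\omega^W)}=\{(V,\omega')\in\operatorname{ScAlg}(W,\omega^W): C_W(C_W(V))=V\}$ (the conformally closed semi-conformal subalgebras). *)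

(* Defs.v *)
(* Vertex operator algebras over a field K of characteristic 0,
   following Lepowsky--Li / Frenkel--Lepowsky--Meurman. *)
From HB Require Import structures.
From mathcomp Require Import all_boot all_order all_algebra.
Set Implicit Arguments. Unset Strict Implicit. Unset Printing Implicit Defensive.
Import Order.TTheory GRing.Theory Num.Theory.
Local Open Scope ring_scope.

Section VOA.
Variables (K : fieldType) (W : lmodType K).

(* A vertex operator map: [Y u n v] is the mode [u_n v], where
   Y(u,z) = sum_n u_n z^{-n-1}. *)
Definition vop := W -> int -> W -> W.

Definition binz (m : int) (i : nat) : K :=
  (\prod_(j < i) (m - (j%:Z))%:~R) / (i`!)%:R.

Definition subspace (V : W -> Prop) : Prop :=
  V 0 /\ forall (a : K) x y, V x -> V y -> V (a *: x + y).

Definition is_VOA (V : W -> Prop) (Y : vop) (vac om : W) : Prop :=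
  let L := fun (m : int) (v : W) => Y om (m + 1) v in
  subspace V /\ V vac /\ V om /\
  (forall u v n, V u -> V v -> V (Y u n v)) /\
  (forall (a : K) u u' v n, V u -> V u' -> V v ->
     Y (a *: u + u') n v = a *: Y u n v + Y u' n v) /\
  (forall (a : K) u v v' n, V u -> V v -> V v' ->
     Y u n (a *: v + v') = a *: Y u n v + Y u n v') /\
  (forall u v, V u -> V v -> exists N : int, forall n, N <= n -> Y u n v = 0) /\
  (forall v n, V v -> Y vac n v = (if n == -1 then v else 0)) /\
  (forall v, V v -> Y v (-1) vac = v) /\
  (forall v n, V v -> 0 <= n -> Y v n vac = 0) /\
  (* Jacobi identity, in Borcherds' component form; the sums are finite and
     taken over any range [0, M) outside of which all terms vanish *)
  (forall (u v w : W) (l m n : int) (M : nat), V u -> V v -> V w ->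
     (forall k : nat, (M <= k)%N ->
        [/\ Y u (l + k%:Z) v = 0, Y v (n + k%:Z) w = 0 & Y u (m + k%:Z) w = 0]) ->
     \sum_(i < M) binz m i *: Y (Y u (l + i%:Z) v) (m + n - i%:Z) w =
     \sum_(i < M) ((-1) ^+ i * binz l i) *:
        (Y u (l + m - i%:Z) (Y v (n + i%:Z) w)
         - (-1) ^+ `|l|%N *: Y v (l + n - i%:Z) (Y u (m + i%:Z) w))) /\
  (exists c : K, forall (m n : int) v, V v ->
     L m (L n v) - L n (L m v) =
     (m - n)%:~R *: L (m + n) v
     + (((m ^+ 3 - m)%:~R / 12%:R) * (if m + n == 0 then c else 0)) *: v) /\
  (* L(-1)-derivative property  Y(L(-1)u, z) = d/dz Y(u, z) *)
  (forall u w n, V u -> V w -> Y (L (-1) u) n w = - (n%:~R *: Y u (n - 1) w)) /\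
  (forall v, V v -> exists (s : seq int) (f : int -> W),
     (forall n, V (f n) /\ L 0 (f n) = n%:~R *: f n) /\ v = \sum_(n <- s) f n) /\
  (forall n : int, exists s : seq W, forall v, V v -> L 0 v = n%:~R *: v ->
     exists c : nat -> K, v = \sum_(i < size s) c i *: s`_i) /\
  (exists N : int, forall (n : int) v, n < N -> V v -> L 0 v = n%:~R *: v -> v = 0).

Definition setT_W : W -> Prop := fun _ => True.
Definition set_eq (A B : W -> Prop) : Prop := forall x, A x <-> B x.

Definition vertex_subalgebra (Y : vop) (vac : W) (V : W -> Prop) : Prop :=
  [/\ subspace V, V vac & forall u v n, V u -> V v -> V (Y u n v)].

Definition vgen (Y : vop) (vac x : W) : W -> Prop :=
  fun v => forall U, vertex_subalgebra Y vac U -> U x -> U v.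

Definition commutant (Y : vop) (U : W -> Prop) : W -> Prop :=
  fun v => forall u (n : int), U u -> 0 <= n -> Y u n v = 0.

Definition ScAlg (Y : vop) (vac om : W) (V : W -> Prop) (omV : W) : Prop :=
  is_VOA V Y vac omV /\
  forall (n : int) v, 0 <= n -> V v -> Y om (n + 1) v = Y omV (n + 1) v.

Definition Sc (Y : vop) (vac om : W) (omV : W) : Prop :=
  exists V, ScAlg Y vac om V omV.

Definition ScClosed (Y : vop) (vac om : W) (V : W -> Prop) (omV : W) : Prop :=
  ScAlg Y vac om V omV /\ set_eq (commutant Y (commutant Y V)) V.

End VOA.

(* Main.v *)
Require Import Defs.
From HB Require Import structures.
From mathcomp Require Import all_boot all_order all_algebra.
From mathcomp Require Import zify ring.
Set Implicit Arguments. Unset Strict Implicit. Unset Printing Implicit Defensive.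
Import Order.TTheory GRing.Theory Num.Theory.
Local Open Scope ring_scope.

Section S.
Variables (K : fieldType) (W : lmodType K) (Y : vop W) (vac om : W).
Hypothesis charK0 : [pchar K] =i pred0.
Hypothesis hW : is_VOA (@setT_W K W) Y vac om.

Let T := @setT_W K W.

Lemma YrD' a u v v' n : Y u n (a *: v + v') = a *: Y u n v + Y u n v'.
Proof. by case: hW => _ [_ [_ [_ [_ [H _]]]]]; apply: H. Qed.
Lemma YlD' a u u' v n : Y (a *: u + u') n v = a *: Y u n v + Y u' n v.
Proof. by case: hW => _ [_ [_ [_ [H _]]]]; apply: H. Qed.
Lemma YrD u v v' n : Y u n (v + v') = Y u n v + Y u n v'.
Proof. by have := YrD' 1 u v v' n; rewrite !scale1r. Qed.
Lemma YlD u u' v n : Y (u + u') n v = Y u n v + Y u' n v.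
Proof. by have := YlD' 1 u u' v n; rewrite !scale1r. Qed.
Lemma Yr0 u n : Y u n 0 = 0.
Proof. have := YrD u 0 0 n; rewrite addr0 => /(congr1 (fun x => x - Y u n 0)).
by rewrite subrr addrK. Qed.
Lemma Yl0 v n : Y 0 n v = 0.
Proof. have := YlD 0 0 v n; rewrite addr0 => /(congr1 (fun x => x - Y 0 n v)).
by rewrite subrr addrK. Qed.
Lemma YrZ a u v n : Y u n (a *: v) = a *: Y u n v.
Proof. by rewrite -[a *: v]addr0 YrD' Yr0 addr0. Qed.
Lemma YlZ a u v n : Y (a *: u) n v = a *: Y u n v.
Proof. by rewrite -[a *: u]addr0 YlD' Yl0 addr0. Qed.
Lemma YrN u v n : Y u n (- v) = - Y u n v.
Proof. by rewrite -scaleN1r YrZ scaleN1r. Qed.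
Lemma YlN u v n : Y (- u) n v = - Y u n v.
Proof. by rewrite -scaleN1r YlZ scaleN1r. Qed.
Lemma YrB u v v' n : Y u n (v - v') = Y u n v - Y u n v'.
Proof. by rewrite YrD YrN. Qed.
Lemma YlB u u' v n : Y (u - u') n v = Y u n v - Y u' n v.
Proof. by rewrite YlD YlN. Qed.
Lemma Ytr u v : exists N : int, forall n, N <= n -> Y u n v = 0.
Proof. by case: hW => _ [_ [_ [_ [_ [_ [H _]]]]]]; apply: H. Qed.
Lemma Yvac v n : Y vac n v = (if n == -1 then v else 0).
Proof. by case: hW => _ [_ [_ [_ [_ [_ [_ [H _]]]]]]]; apply: H. Qed.
Lemma Ycr1 v : Y v (-1) vac = v.
Proof. by case: hW => _ [_ [_ [_ [_ [_ [_ [_ [H _]]]]]]]]; apply: H. Qed.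
Lemma Ycr2 v n : 0 <= n -> Y v n vac = 0.
Proof. by case: hW => _ [_ [_ [_ [_ [_ [_ [_ [_ [H _]]]]]]]]]; apply: H. Qed.
Lemma YJ (u v w : W) (l m n : int) (M : nat) :
    (forall k : nat, (M <= k)%N ->
        [/\ Y u (l + k%:Z) v = 0, Y v (n + k%:Z) w = 0 & Y u (m + k%:Z) w = 0]) ->
     \sum_(i < M) binz K m i *: Y (Y u (l + i%:Z) v) (m + n - i%:Z) w =
     \sum_(i < M) ((-1) ^+ i * binz K l i) *:
        (Y u (l + m - i%:Z) (Y v (n + i%:Z) w)
         - (-1) ^+ `|l|%N *: Y v (l + n - i%:Z) (Y u (m + i%:Z) w)).
Proof. by case: hW => _ [_ [_ [_ [_ [_ [_ [_ [_ [_ [H _]]]]]]]]]]; apply: H. Qed.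
Lemma Yder u w n : Y (Y om (-1 + 1) u) n w = - (n%:~R *: Y u (n - 1) w).
Proof. by case: hW => _ [_ [_ [_ [_ [_ [_ [_ [_ [_ [_ [_ [H _]]]]]]]]]]]]; apply: H. Qed.

Lemma binz0 m : binz K m 0 = 1.
Proof. by rewrite /binz big_ord0 divr1. Qed.
Lemma binz0S i : binz K 0 i.+1 = 0.
Proof. by rewrite /binz big_ord_recl /= subrr mul0r mul0r. Qed.


Lemma comm u v w m n (M0 : nat) : (forall i : nat, (M0 <= i)%N -> Y u i%:Z v = 0) ->
  \sum_(i < M0) binz K m i *: Y (Y u i%:Z v) (m + n - i%:Z) w
    = Y u m (Y v n w) - Y v n (Y u m w).
Proof.
move=> Hu; case: (Ytr v w) => N1 H1; case: (Ytr u w) => N2 H2.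
pose M := (M0 + `|N1 - n|%N + `|N2 - m|%N).+1.
have Hk : forall k : nat, (M <= k)%N ->
   [/\ Y u (0 + k%:Z) v = 0, Y v (n + k%:Z) w = 0 & Y u (m + k%:Z) w = 0].
  move=> k Hk; split.
  - by rewrite add0r; apply: Hu; lia.
  - by apply: H1; lia.
  - by apply: H2; lia.
have E := @YJ u v w 0 m n M Hk.
rewrite [X in _ = X]big_ord_recl [X in _ = _ + X]big1 ?addr0 in E; last first.
  by move=> i _; rewrite binz0S mulr0 scale0r.
simpl in E. have e1 : ((-1) ^+ 0 * binz K 0 0 : K) = 1 by rewrite expr0 binz0 mulr1. have e2 : ((-1) ^+ 0 : K) = 1 by []. rewrite e1 e2 !scale1r !add0r in E.
move: E; under eq_bigr do rewrite add0r; move=> E.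
rewrite -{}E.
rewrite (big_ord_widen M (fun i => binz K m i *: Y (Y u i%:Z v) (m + n - i%:Z) w)); last by lia.
rewrite big_mkcond; apply: eq_bigr => i _; case: ifP => // /negbT; rewrite -leqNgt => /Hu ->.
by rewrite Yl0 scaler0.
Qed.


Lemma skew u v : (forall k, 0 <= k -> Y u k v = 0) -> forall l, 0 <= l -> Y v l u = 0.
Proof.
move=> Hu l Hl.
have Hk : forall k : nat, (1 <= k)%N -> [/\ Y u (l + k%:Z) v = 0,
    Y v (0 + k%:Z) vac = 0 & Y u (-1 + k%:Z) vac = 0].
  by move=> k Hk; split; [apply: Hu | apply: Ycr2 | apply: Ycr2]; lia.
have E := @YJ u v vac l (-1) 0 1 Hk.
rewrite !big_ord1 in E; simpl in E.
have e1 : l + (Posz 0) = l by rewrite addr0.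
have e2 : (-1 : int) + 0 - (Posz 0) = -1 by [].
have e3 : l + -1 - (Posz 0) = l - 1 by rewrite subr0.
have e4 : (0 : int) + (Posz 0) = 0 by [].
have e5 : l + 0 - (Posz 0) = l by rewrite addr0 subr0.
have e6 : (-1 : int) + (Posz 0) = -1 by [].
rewrite e5 e3 e2 e1 e4  (Hu l Hl) Yl0 scaler0 Ycr2 // Yr0 Ycr1 add0r in E.
move/esym/eqP: E; rewrite scaler_eq0 oppr_eq0 scaler_eq0 signr_eq0 /=.
case/orP=> [|/eqP //]; rewrite expr0 mul1r /binz big_ord0 div1r invr_eq0.
by rewrite oner_eq0.
Qed.

Definition Ann (w u : W) := forall n : int, 0 <= n -> Y u n w = 0.

Lemma Ann_vsa w : vertex_subalgebra Y vac (Ann w).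
Proof.
split.
- split; first by move=> n _; rewrite Yl0.
  by move=> a x y Hx Hy n Hn; rewrite YlD YlZ Hx // Hy // scaler0 addr0.
- by move=> n Hn; rewrite Yvac; case: eqP => // e; move: Hn; rewrite e.
- move=> u u' l Hu Hu' n Hn.
  case: (Ytr u u') => N HN.
  pose M := (`|N - l|%N).+1.
  have Hk : forall k : nat, (M <= k)%N -> [/\ Y u (l + k%:Z) u' = 0,
      Y u' (n + k%:Z) w = 0 & Y u (0 + k%:Z) w = 0].
    move=> k Hk; split; [apply: HN | apply: Hu' | apply: Hu]; lia.
  have E := @YJ u u' w l 0 n M Hk.
  rewrite big_ord_recl big1 ?addr0 in E; last by move=> i _; rewrite binz0S scale0r.
  simpl in E.
  have e1 : l + (Posz 0) = l by rewrite addr0.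
  have e2 : (0 : int) + n - (Posz 0) = n by rewrite add0r subr0.
  rewrite add0r binz0 scale1r in E; rewrite E.
  apply: big1 => i _; rewrite Hu' ?Yr0 ?Hu ?Yr0 ?scaler0 ?subr0 ?scaler0 //; lia.
Qed.


Lemma C_vsa U : vertex_subalgebra Y vac (commutant Y U).
Proof.
split.
- split; first by move=> u n _ _; rewrite Yr0.
  by move=> a x y Hx Hy u n Hu Hn; rewrite YrD YrZ Hx // Hy // scaler0 addr0.
- by move=> u n _ Hn; rewrite Ycr2.
- move=> a b k Ha Hb u n Hu Hn.
  have := @comm u a b n k 0 (fun i _ => Ha u i Hu (le0z_nat i)).
  by rewrite big_ord0 (Hb u n Hu Hn) Yr0 subr0.
Qed.

Lemma C_gen x w : commutant Y (vgen Y vac x) w <-> Ann w x.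
Proof.
split; first by move=> H n Hn; apply: H => // U _.
by move=> H u n Hu Hn; apply: (Hu (Ann w) (Ann_vsa w) H).
Qed.

Lemma CC_ext (U : W -> Prop) v : U v -> commutant Y (commutant Y U) v.
Proof. by move=> Hv u n Hu Hn; apply: skew => // k Hk; apply: Hu. Qed.

Lemma C_anti (U U' : W -> Prop) : (forall x, U x -> U' x) ->
  forall v, commutant Y U' v -> commutant Y U v.
Proof. by move=> H v Hv u n Hu; apply: Hv; apply: H. Qed.

Lemma C_eq (U U' : W -> Prop) : set_eq U U' -> set_eq (commutant Y U) (commutant Y U').
Proof. by move=> H x; split; apply: C_anti => y /H. Qed.

Lemma CCC (U : W -> Prop) :
  set_eq (commutant Y (commutant Y (commutant Y U))) (commutant Y U).
Proof.
move=> x; split; last exact: CC_ext.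
by apply: C_anti => y; apply: CC_ext.
Qed.

Lemma natS_neq0 (k : int) : 0 <= k -> ((k + 1)%:~R : K) != 0.
Proof.
case: k => // p _.
by rewrite -PoszD -pmulrn ((pcharf0P K).1 charK0) addn1.
Qed.


Lemma intr_neq0 (z : int) : z != 0 -> (z%:~R : K) != 0.
Proof.
have h := (pcharf0P K).1 charK0.
case: z => [p|p] hz; first by rewrite -pmulrn h; apply: contra hz => /eqP ->.
by rewrite NegzE intrN oppr_eq0 -pmulrn h.
Qed.

Let Tm (x : W) := Y om (0 + 1) x.

Lemma Tm_sum (r : seq int) (F : int -> W) : Tm (\sum_(k <- r) F k) = \sum_(k <- r) Tm (F k).
Proof.
elim: r => [|a r IH]; first by rewrite !big_nil /Tm Yr0.
by rewrite !big_cons /Tm YrD -IH.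
Qed.

Fixpoint proj (s : seq int) (n : int) (x : W) : W :=
  match s with
  | [::] => x
  | k :: s' => let y := proj s' n x in
      if k == n then y else ((n - k)%:~R)^-1 *: (Tm y - k%:~R *: y)
  end.

Lemma projD s n x y : proj s n (x + y) = proj s n x + proj s n y.
Proof.
elim: s => [|k s IH] //=; case: eqP => // _.
rewrite IH /Tm YrD -scalerDr; congr (_ *: _).
by rewrite scalerDr opprD addrACA.
Qed.

Lemma proj0 s n : proj s n 0 = 0.
Proof. by have := projD s n 0 0; rewrite addr0 => /(congr1 (fun z => z - proj s n 0)); rewrite subrr addrK. Qed.

Lemma proj_sum s n (r : seq int) (F : int -> W) :
  proj s n (\sum_(k <- r) F k) = \sum_(k <- r) proj s n (F k).
Proof.
elim: r => [|a r IH]; first by rewrite !big_nil proj0.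
by rewrite !big_cons projD IH.
Qed.

Lemma proj_eig s n x m : Tm x = m%:~R *: x ->
  proj s n x = (\prod_(k <- s | k != n) ((m - k)%:~R / (n - k)%:~R)) *: x.
Proof.
move=> Hx; elim: s => [|k s IH] /=; first by rewrite big_nil scale1r.
rewrite big_cons; case: (eqVneq k n) => [->|hk] /=; first exact: IH.
rewrite IH /Tm YrZ -/(Tm x) Hx.
rewrite !scalerA -scalerBl scalerA; congr (_ *: _).
rewrite intrB; ring.
Qed.

Lemma prod_zero s n m : m \in s -> m != n ->
  \prod_(k <- s | k != n) ((m - k)%:~R / (n - k)%:~R) = 0 :> K.
Proof.
elim: s => //= k s IH; rewrite inE big_cons => /orP [/eqP <-|hm] hmn.
  by rewrite hmn subrr mulr0z mul0r mul0r.
by case: ifP => _; rewrite IH ?mulr0.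
Qed.

Lemma proj_self s n x : Tm x = n%:~R *: x -> proj s n x = x.
Proof.
move=> Hx; rewrite (proj_eig s n Hx) big1_seq ?scale1r // => k /andP [hk _].
by apply: divff; apply: intr_neq0; rewrite subr_eq0 eq_sym.
Qed.

Lemma proj_zero s n x m : m \in s -> m != n -> Tm x = m%:~R *: x -> proj s n x = 0.
Proof. by move=> hm hmn Hx; rewrite (proj_eig s n Hx) prod_zero // scale0r. Qed.

Lemma subZ (D : W -> Prop) a z : subspace D -> D z -> D (a *: z).
Proof. by case=> h0 h hz; rewrite -[a *: z]addr0; apply: h. Qed.
Lemma subD (D : W -> Prop) z1 z2 : subspace D -> D z1 -> D z2 -> D (z1 + z2).
Proof. by case=> h0 h h1 h2; rewrite -[z1]scale1r; apply: h. Qed.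

Lemma proj_D (D : W -> Prop) s n x : subspace D -> (forall y, D y -> D (Tm y)) ->
  D x -> D (proj s n x).
Proof.
move=> hs hT hx; elim: s => //= k s IH; case: ifP => // _.
apply: subZ => //; apply: subD => //; first exact: hT.
by rewrite -scaleN1r; do 2 apply: subZ => //.
Qed.

Lemma sum_pick (r : seq int) k (x : W) : uniq r -> k \in r ->
  \sum_(n <- r) (if k == n then x else 0) = x.
Proof.
elim: r => //= a r IH /andP [ha hu]; rewrite inE big_cons => /orP [/eqP ->|hk].
  rewrite eqxx big1_seq ?addr0 // => i /andP [_ hi]; case: eqP => // e.
  by move: ha; rewrite e hi.
have -> : (k == a) = false by apply/eqP => e; move: ha; rewrite -e hk.
by rewrite add0r IH.
Qed.

Lemma grade (D : W -> Prop) (omV : W) : subspace D ->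
  (forall x, D x -> D (Y omV (0 + 1) x)) ->
  (forall x, D x -> Y om (0 + 1) x = Y omV (0 + 1) x) ->
  forall v, D v -> exists (s : seq int) (f : int -> W),
    (forall n, D (f n) /\ Y omV (0 + 1) (f n) = n%:~R *: f n) /\ v = \sum_(n <- s) f n.
Proof.
move=> hs hcl heq v Dv.
have hT : forall y, D y -> D (Tm y) by move=> y Dy; rewrite /Tm heq //; apply: hcl.
have [s [g [Hg ev]]] : exists (s : seq int) (g : int -> W),
    (forall n, Tm (g n) = n%:~R *: g n) /\ v = \sum_(n <- s) g n.
  case: hW => _ [_ [_ [_ [_ [_ [_ [_ [_ [_ [_ [_ [_ [H _]]]]]]]]]]]]].
  have [s [g [Hg ->]]] := H v I.
  by exists s, g; split => // n; case: (Hg n).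
have hf : forall n, proj s n v = \sum_(k <- s) (if k == n then g k else 0).
  move=> n; rewrite ev proj_sum; apply: eq_big_seq => k hk.
  case: (eqVneq k n) => [<-|hkn]; first exact: proj_self.
  exact: (proj_zero hk hkn).
exists (undup s), (fun n => proj s n v); split.
  move=> n; split; first exact: proj_D.
  rewrite -heq; last exact: proj_D.
  rewrite hf -/(Tm _) Tm_sum scaler_sumr; apply: eq_bigr => k _.
  by case: eqP => [->|_]; rewrite ?Hg // /Tm Yr0 scaler0.
under [RHS]eq_bigr do rewrite hf.
rewrite {1}ev exchange_big /=; apply: eq_big_seq => k hk.
rewrite (eq_bigr (fun i => if k == i then g k else 0)); last by move=> i _; rewrite eq_sym.
by rewrite sum_pick ?undup_uniq ?mem_undup.
Qed.

Section VV.
Variables (V : W -> Prop) (omV : W).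
Hypothesis hV : is_VOA V Y vac omV.

Lemma V_vsa : vertex_subalgebra Y vac V.
Proof. by case: hV => H1 [H2 [_ [H4 _]]]; split. Qed.
Lemma V_om : V omV.
Proof. by case: hV => _ [_ [H _]]. Qed.

Lemma om0 v : V v -> Y omV 0 v = Y om 0 v.
Proof.
move=> Hv.
have HvacV : V vac by case: V_vsa.
have H1 := Yder v vac (-1).
have H2 : Y (Y omV (-1 + 1) v) (-1) vac = - ((-1)%:~R *: Y v (-1 - 1) vac).
  by case: hV => _ [_ [_ [_ [_ [_ [_ [_ [_ [_ [_ [_ [H _]]]]]]]]]]]]; apply: H.
change (Y omV (-1 + 1) v = Y om (-1 + 1) v); rewrite Ycr1 in H1; rewrite Ycr1 in H2. by rewrite H2 -H1.
Qed.

Lemma L4 w : Ann w omV -> forall v, V v -> Ann w v.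
Proof.
move=> Hw v Hv.
have key : forall k : int, Y omV 0 (Y v k w) = - (k%:~R *: Y v (k - 1) w).
  move=> k; case: (Ytr omV v) => N HN.
  have := @comm omV v w 0 k (`|N|%N).+1 (fun i hi => HN i ltac:(lia)).
  rewrite big_ord_recl big1 => [|i _]; last by rewrite binz0S scale0r.
  simpl; rewrite binz0 scale1r addr0 (Hw 0 (lexx _)) Yr0 !subr0 => <-.
  rewrite add0r.
  rewrite (om0 Hv); exact: Yder.
case: (Ytr v w) => N' HN'.
have ind : forall d : nat, forall k : int, 0 <= k -> N' <= k + d%:Z -> Y v k w = 0.
  elim=> [|d IH] k Hk Hkd; first by apply: HN'; lia.
  have h1 : Y v (k + 1) w = 0 by apply: IH; lia.
  have := key (k + 1); rewrite h1 Yr0 addrK => /esym/eqP.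
  rewrite oppr_eq0 scaler_eq0 (negbTE (natS_neq0 Hk)) /= => /eqP //.
by move=> n Hn; apply: (ind `|N' - n|%N n Hn); lia.
Qed.

Lemma CgenV : set_eq (commutant Y (vgen Y vac omV)) (commutant Y V).
Proof.
move=> w; split.
  by move/C_gen=> H u n Hu Hn; apply: (L4 H).
apply: C_anti => x Hx; apply: Hx; [exact: V_vsa | exact: V_om].
Qed.


Lemma VirW : exists c : K, forall (m n : int) (v : W),
  Y omV (m + 1) (Y omV (n + 1) v) - Y omV (n + 1) (Y omV (m + 1) v) =
  (m - n)%:~R *: Y omV (m + n + 1) v
  + ((m ^+ 3 - m)%:~R / 12%:R * (if m + n == 0 then c else 0)) *: v.
Proof.
case: hV => _ [HvacV [HomV [_ [_ [_ [_ [_ [_ [_ [_ [[c Hc] _]]]]]]]]]]].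
exists c => m n v.
have Hp : forall p : int, 0 <= p -> Y omV (p + 1) omV =
   (p + 2)%:~R *: Y omV (p - 1) vac
   + ((p ^+ 3 - p)%:~R / 12%:R * (if p - 2 == 0 then c else 0)) *: vac.
  move=> p hp; have := Hc p (-2) vac HvacV.
  rewrite (@Ycr2 _ (p + 1)); last by lia.
  rewrite Yr0 subr0.
  have -> : (-2 + 1 : int) = -1 by [].
  rewrite Ycr1 opprK.
  have -> : p + -2 + 1 = p - 1 by lia.
  done.
have w4 : forall i : nat, (4 <= i)%N -> Y omV i%:Z omV = 0.
  move=> i hi; have := Hp (i%:Z - 1) ltac:(lia); rewrite subrK => ->.
  rewrite Ycr2; last by lia.
  have -> : (i%:Z - 1 - 2 == 0) = false by apply/eqP; lia.
  by rewrite scaler0 add0r mulr0 scale0r.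
have E := @comm omV omV v (m + 1) (n + 1) 4 w4.
rewrite !big_ord_recl big_ord0 /bump /= in E.
have w1 : Y omV (Posz 1) omV = (2:int)%:~R *: omV.
  have := Hp 0 (lexx _); rewrite Ycr1 => ->.
  by have -> : ((0:int) - 2 == 0) = false by []; rewrite mulr0 scale0r addr0.
have w2 : Y omV (Posz 2) omV = 0.
  have := Hp 1 ltac:(done); rewrite Ycr2 // => ->.
  by have -> : ((1:int) - 2 == 0) = false by []; rewrite mulr0 scale0r addr0 scaler0.
have w3 : Y omV (Posz 3) omV = ((6:int)%:~R / 12%:R * c) *: vac.
  have := Hp 2 ltac:(done); rewrite Ycr2 // => ->.
  by have -> : ((2:int) - 2 == 0) = true by []; rewrite scaler0 add0r.
have w0 := om0 HomV.
have Yd : forall u w k, Y (Y om 0 u) k w = - (k%:~R *: Y u (k - 1) w) := Yder.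
have e0 : m + 1 + (n + 1) - Posz 0 - 1 = m + n + 1 by lia.
have e1 : m + 1 + (n + 1) - Posz (bump 0 0) = m + n + 1 by rewrite /bump /=; lia.
have e3 : (m + 1 + (n + 1) - Posz (bump 0 (bump 0 (bump 0 0))) == -1) = (m + n == 0).
  by rewrite /bump /=; apply/eqP/eqP; lia.
rewrite w1 w2 w3 w0 Yd e0 e1 Yl0 !YlZ Yvac e3 in E.
rewrite -{}E.
have c6 : (6%:R : K) != 0 by rewrite ((pcharf0P K).1 charK0).
have c12 : (12%:R : K) != 0 by rewrite ((pcharf0P K).1 charK0).
rewrite /binz !big_ord_recl !big_ord0 /bump /=.
case: (m + n == 0); rewrite ?scaler0 ?addr0 !scalerN !scalerA.
  rewrite addrA -scaleNr -scalerDl add0r; congr (_ *: _ + _ *: _).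
    by rewrite !factS fact0; field; rewrite ?oner_eq0 ?((pcharf0P K).1 charK0).
  have b1 : m + 1 - Posz (bump 0 0) = m by rewrite /bump /=; lia.
  have b2 : m + 1 - Posz (bump 0 (bump 0 0)) = m - 1 by rewrite /bump /=; lia.
  by rewrite b1 b2 !factS fact0; field; rewrite ?oner_eq0 ?((pcharf0P K).1 charK0).
rewrite mulr0 scale0r addr0 -scaleNr -scalerDl; congr (_ *: _).
by rewrite !factS fact0; field; rewrite ?oner_eq0 ?((pcharf0P K).1 charK0).
Qed.
End VV.

Lemma main :
  (forall V omV, ScAlg Y vac om V omV -> Sc Y vac om omV) /\
  (forall omV, Sc Y vac om omV ->
     ScClosed Y vac om (commutant Y (commutant Y (vgen Y vac omV))) omV) /\
  (forall V omV, ScClosed Y vac om V omV ->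
     set_eq V (commutant Y (commutant Y (vgen Y vac omV)))).
Proof.
split; first by move=> V omV h; exists V.
split; last first.
  move=> V omV [[hV hsc] hcl] x.
  have e1 := C_eq (CgenV hV).
  split => h; first by apply/(e1 x).2; apply/(hcl x).2.
  by apply/(hcl x).1; apply/(e1 x).1.
move=> omV [V [hV hsc]].
have eC := CgenV hV.
have Hdiff : commutant Y (vgen Y vac omV) (om - omV).
  apply/(eC _).2 => v n Hv Hn; apply: skew => // k hk; rewrite YlB.
  have [->|kpos] : k = 0 \/ 0 < k by lia.
    by rewrite (om0 hV Hv) subrr.
  by have := hsc (k - 1) v ltac:(lia) Hv; rewrite subrK => ->; rewrite subrr.
have keyD : forall d n, commutant Y (commutant Y (vgen Y vac omV)) d -> 0 <= n ->
    Y om n d = Y omV n d.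
  move=> d n Dd hn; apply/eqP; rewrite -subr_eq0 -YlB; apply/eqP; exact: Dd _ n Hdiff hn.
have DomV : commutant Y (commutant Y (vgen Y vac omV)) omV.
  by apply: CC_ext => U _ h.
have [Dsub Dvac Dcl] := C_vsa (commutant Y (vgen Y vac omV)).
case: hW => _ [_ [_ [_ [_ [_ [_ [_ [_ [_ [_ [_ [_ [_ [Hfd Hlb]]]]]]]]]]]]]].
split; last exact: CCC.
split; last by move=> n v hn Dv; apply: keyD => //; lia.
split; first exact: Dsub. split; first exact: Dvac. split; first exact: DomV.
split; first exact: Dcl.
split; first by move=> *; apply: YlD'. split; first by move=> *; apply: YrD'.
split; first by move=> u v _ _; apply: Ytr. split; first by move=> v n _; apply: Yvac.
split; first by move=> v _; apply: Ycr1. split; first by move=> v n _; apply: Ycr2.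
split; first by move=> u v w l m n M _ _ _; apply: YJ.
split; first by have [c Hc] := VirW hV; exists c => m n v _; apply: Hc.
split.
  move=> u w n Du Dw; change (Y (Y omV 0 u) n w = - (n%:~R *: Y u (n - 1) w)).
  by rewrite -keyD //; exact: Yder.
split; first by apply: grade => // [x Dx|x Dx]; [apply: Dcl | apply: keyD].
split.
  move=> n; have [s Hs] := Hfd n; exists s => v Dv Hv; apply: Hs => //.
  by rewrite keyD.
have [N HN] := Hlb; exists N => n v hn Dv Hv; apply: (HN n) => //.
by rewrite keyD.
Qed.

End S.


Theorem proposition2p1 (K : fieldType) (W : lmodType K) (Y : vop W)
    (vac om : W) (charK0 : [pchar K] =i pred0)
    (hW : is_VOA (@setT_W K W) Y vac om) :
  (* pi maps ScAlg(W) into Sc(W) *)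
  (forall V omV, ScAlg Y vac om V omV -> Sc Y vac om omV) /\
  (* the proposed inverse maps Sc(W) into the closed semi-conformal subalgebras *)
  (forall omV, Sc Y vac om omV ->
     ScClosed Y vac om (commutant Y (commutant Y (vgen Y vac omV))) omV) /\
  (* and every closed semi-conformal subalgebra is recovered from its
     semi-conformal vector: pi is injective on the closed ones, with the
     stated inverse (pi o inverse = id holds by construction) *)
  (forall V omV, ScClosed Y vac om V omV ->
     set_eq V (commutant Y (commutant Y (vgen Y vac omV)))).
Proof. exact: (main charK0 hW). Qed.
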